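(* For every integer $n\ge2$, $K(n)\ge n-1$.
   Context: Electricity division instance: supply $S>0$ and demands $D=(D[1],\dots,D[n])$ with $0<D[i]\le S$. A schedule partitions the time interval into finitely many subintervals, each assigned a set of households whose total demand is at most $S$; the egalitarian connection-time is the maximum, over schedules, of the minimum over households of the fraction of time the household is connected. For an integer $k\ge1$, a $k$-times bin packing of $D$ assigns $k$ copies of each household (item of size $D[i]$) to bins so that each bin has total size at most $S$ and no bin contains two copies of the same item; $OPT(D_k)$ is the minimum number of bins. $K(D)$ is the smallest positive integer $k$ such that the egalitarian connection-time of the instance equals $k/OPT(D_k)$, and $K(n)$ is the maximum of $K(D)$ over all instances with $n$ households. *)

(* Defs.v *)
From HB Require Import structures.
From mathcomp Require Import all_boot all_order all_algebra.
From mathcomp Require Import reals.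
Set Implicit Arguments. Unset Strict Implicit. Unset Printing Implicit Defensive.
Import Order.TTheory GRing.Theory Num.Theory.
Local Open Scope ring_scope.

Section ElectricityDivision.
Variables (R : realType) (n : nat).

Definition instance (S : R) (D : 'I_n -> R) : Prop :=
  0 < S /\ forall i, 0 < D i /\ D i <= S.

Definition feasible (S : R) (D : 'I_n -> R) (A : {set 'I_n}) : bool :=
  \sum_(i in A) D i <= S.

(* A schedule of the (normalized, unit-length) time interval: a finite list of
   consecutive subintervals, given by their (positive) lengths summing to 1,
   each assigned a feasible set of connected households. *)
Definition schedule (S : R) (D : 'I_n -> R) (sch : seq (R * {set 'I_n})) : Prop :=
  (forall p, p \in sch -> 0 < p.1 /\ feasible S D p.2) /\
  \sum_(p <- sch) p.1 = 1.

Definition conn_time (sch : seq (R * {set 'I_n})) (i : 'I_n) : R :=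
  \sum_(p <- sch | i \in p.2) p.1.

Definition is_min_conn (sch : seq (R * {set 'I_n})) (t : R) : Prop :=
  (exists i, conn_time sch i = t) /\ (forall i, t <= conn_time sch i).

Definition egal_time (S : R) (D : 'I_n -> R) (t : R) : Prop :=
  (exists sch, schedule S D sch /\ is_min_conn sch t) /\
  (forall sch t', schedule S D sch -> is_min_conn sch t' -> t' <= t).

(* A k-times bin packing: a list of bins (sets of items, so no bin contains
   two copies of the same item), each of total size at most S, such that
   every item lies in exactly k bins. *)
Definition ktimes_packing (S : R) (D : 'I_n -> R) (k : nat)
    (bins : seq {set 'I_n}) : Prop :=
  (forall B, B \in bins -> feasible S D B) /\
  (forall i : 'I_n, count (fun B : {set 'I_n} => i \in B) bins = k).

Definition is_OPT (S : R) (D : 'I_n -> R) (k m : nat) : Prop :=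
  (exists bins, ktimes_packing S D k bins /\ size bins = m) /\
  (forall bins, ktimes_packing S D k bins -> (m <= size bins)%N).

Definition egal_eq_ratio (S : R) (D : 'I_n -> R) (k : nat) : Prop :=
  exists (t : R) (m : nat), egal_time S D t /\ is_OPT S D k m /\
    t = k%:R / m%:R.

End ElectricityDivision.

(* Main.v *)
Require Import Defs.
From HB Require Import structures.
From mathcomp Require Import all_boot all_order all_algebra.
From mathcomp Require Import reals.
From mathcomp Require Import zify.
Set Implicit Arguments. Unset Strict Implicit. Unset Printing Implicit Defensive.
Import Order.TTheory GRing.Theory Num.Theory.
Local Open Scope ring_scope.

Section Aux.
Variables (R : realType) (n : nat).
Hypothesis hn : (2 <= n)%N.

Let S : R := (n.-1)%:R.
Let D : 'I_n -> R := fun _ => 1.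

Lemma feasE (A : {set 'I_n}) : feasible S D A = (#|A| <= n.-1)%N.
Proof. by rewrite /feasible /D /S sumr_const ler_nat. Qed.

Lemma conn_sum (sch : seq (R * {set 'I_n})) :
  \sum_(i : 'I_n) conn_time sch i = \sum_(p <- sch) p.1 * #|p.2|%:R.
Proof.
rewrite /conn_time.
under eq_bigr => i _ do rewrite big_mkcond /=.
rewrite exchange_big /=; apply: eq_bigr => p _.
by rewrite -big_mkcond /= sumr_const mulr_natr.
Qed.

Lemma upper (sch : seq (R * {set 'I_n})) t :
  schedule S D sch -> is_min_conn sch t -> t * n%:R <= n.-1%:R.
Proof.
move=> [hs h1] [_ ht].
have -> : t * n%:R = \sum_(i : 'I_n) t by rewrite sumr_const card_ord mulr_natr.
apply: le_trans (ler_sum _ (fun i _ => ht i)) _.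
rewrite conn_sum big_seq.
apply: le_trans (_ : \sum_(p <- sch | p \in sch) p.1 * n.-1%:R <= _).
  apply: ler_sum => p hp; have [p0 pf] := hs p hp.
  by apply: ler_wpM2l; [apply: ltW | rewrite ler_nat -feasE].
by rewrite -big_seq -mulr_suml h1 mul1r.
Qed.

Definition sch0 : seq (R * {set 'I_n}) :=
  [seq (n%:R^-1, [set~ i]) | i <- enum 'I_n].

Lemma n_pos : (0 < n)%N. Proof. by apply: leq_trans hn. Qed.

Lemma conn0 j : conn_time sch0 j = n.-1%:R / n%:R.
Proof.
rewrite /conn_time /sch0 big_map big_enum_cond /=.
rewrite (eq_bigl (fun i => i \in [set~ j])); last first.
  by move=> i; rewrite !in_setC1 eq_sym.
by rewrite sumr_const cardsC1 card_ord mulr_natl.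
Qed.

Lemma sched0 : schedule S D sch0.
Proof.
split.
  move=> p /mapP [i _ ->] /=; split.
    by rewrite invr_gt0 ltr0n n_pos.
  by rewrite feasE cardsC1 card_ord.
rewrite big_map big_enum /= sumr_const card_ord.
by rewrite -(mulr_natr (n%:R^-1)) mulVf // pnatr_eq0 -lt0n n_pos.
Qed.

Lemma minconn0 : is_min_conn sch0 (n.-1%:R / n%:R).
Proof.
split; last by move=> i; rewrite conn0.
by exists (Ordinal n_pos); rewrite conn0.
Qed.

Lemma egal0 t : egal_time S D t -> t = n.-1%:R / n%:R.
Proof.
move=> [[sch [hs hm]] hmax].
have h1 := hmax _ _ sched0 minconn0.
have h2 := upper hs hm.
have hn0 : 0 < (n%:R : R) by rewrite ltr0n n_pos.
apply/eqP; rewrite eq_le h1 andbT.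
by rewrite ler_pdivlMr.
Qed.

Lemma egal0' : egal_time S D (n.-1%:R / n%:R).
Proof.
split; first by exists sch0; split; [apply: sched0 | apply: minconn0].
move=> sch t' hs hm; have := upper hs hm.
have hn0 : 0 < (n%:R : R) by rewrite ltr0n n_pos.
by rewrite ler_pdivlMr.
Qed.

Definition bins0 : seq {set 'I_n} := [seq [set~ i] | i <- enum 'I_n].

Lemma opt0 : is_OPT S D n.-1 n.
Proof.
split.
  exists bins0; split; last by rewrite size_map size_enum_ord.
  split.
    by move=> B /mapP [i _ ->]; rewrite feasE cardsC1 card_ord.
  move=> j; rewrite count_map -sum1_count big_enum_cond /=.
  rewrite (eq_bigl (fun i => i \in [set~ j])); last first.
    by move=> i; rewrite !in_setC1 eq_sym.
  by rewrite sum1_card cardsC1 card_ord.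
move=> bins [hf hc].
have e1 : (\sum_(i : 'I_n) count (fun B : {set 'I_n} => i \in B) bins = n * n.-1)%N.
  by rewrite (eq_bigr (fun=> n.-1)) // sum_nat_const card_ord.
have e2 : (\sum_(i : 'I_n) count (fun B : {set 'I_n} => i \in B) bins
          = \sum_(B <- bins) #|B|)%N.
  rewrite (eq_bigr (fun i : 'I_n => \sum_(B <- bins) nat_of_bool (i \in B))%N); last first.
    move=> i _; rewrite -sum1_count big_mkcond /=.
    by apply: eq_bigr => B _; case: (i \in B).
  rewrite exchange_big /=; apply: eq_bigr => B _.
  by rewrite -big_mkcond /= sum1_card.
have e3 : (\sum_(B <- bins) #|B| <= size bins * n.-1)%N.
  rewrite -sum1_size big_distrl /= big_seq [X in (_ <= X)%N]big_seq.
  apply: leq_sum => B hB; rewrite mul1n -feasE; exact: hf.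
have hpos : (0 < n.-1)%N by case: n hn => [|[|m]].
by rewrite -(leq_pmul2r hpos) -e1 e2.
Qed.

End Aux.

Theorem proposition1 (R : realType) (n : nat) (hn : (2 <= n)%N) :
  exists (S : R) (D : 'I_n -> R),
    instance S D /\
    (exists k : nat, (0 < k)%N /\ egal_eq_ratio S D k) /\
    (forall k : nat, (0 < k)%N -> (k < n.-1)%N -> ~ egal_eq_ratio S D k).
Proof.
have hpos : (0 < n.-1)%N by case: n hn => [|[|m]].
exists (n.-1%:R), (fun _ => 1); split.
  split; first by rewrite ltr0n.
  by move=> _; rewrite ltr01 ler1n.
split.
  exists n.-1; split => //.
  exists (n.-1%:R / n%:R), n; split; first exact: egal0'.
  by split; first exact: opt0.
move=> k k0 kl [t [m [ht [_ e]]]].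
rewrite (egal0 hn ht) in e.
have hn0 : (n%:R : R) != 0 by rewrite pnatr_eq0 -lt0n (leq_trans _ hn).
case: m e => [|m] e.
  move: e; rewrite invr0 mulr0 => /eqP; rewrite mulf_eq0 invr_eq0 pnatr_eq0.
  by rewrite (negPf hn0) orbF -[_ == _]negbK -lt0n hpos.
move/eqP: e; rewrite eqr_div // ?pnatr_eq0 // -!natrM eqr_nat => /eqP e.
have : (k * n = k * n.-1 + k)%N by case: n hn e {hpos kl hn0 ht} => [|n'] //= _ _; lia.
move: e kl; rewrite -/(n.-1) => e kl h; rewrite h in e.
move: e kl k0; move: (n.-1) => p e kl k0.
case: (leqP m.+1 k) => hm.
  have : (p * m.+1 <= p * k)%N by rewrite leq_mul2l hm orbT.
  lia.
have : (p * k.+1 <= p * m.+1)%N by rewrite leq_mul2l hm orbT.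
lia.
Qed.
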